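(* For every $n\ge 2$, $$N(n)=\left(\sum_{i=0}^{n-1}\frac{(n-1)!}{i!}\right)N(n-1),$$ where $N(1)=1$.
   Context: A semi-Heyting algebra is an algebra $\langle L,\vee,\wedge,\to,0,1\rangle$ such that: (SH1) $\langle L,\vee,\wedge,0,1\rangle$ is a bounded lattice with least element $0$ and greatest element $1$; (SH2) $x\wedge(x\to y)=x\wedge y$; (SH3) $x\wedge(y\to z)=x\wedge[(x\wedge y)\to(x\wedge z)]$; (SH4) $x\to x=1$, for all $x,y,z\in L$. For $n\ge 1$, $C_n$ denotes the chain $a_0<a_1<\cdots<a_{n-1}$ with $0=a_0$, $1=a_{n-1}$ (for $n=1$, $0=1$), with $\wedge=\min$, $\vee=\max$. $N(n)$ denotes the number of binary operations $\to$ on $C_n$ such that $\langle C_n,\vee,\wedge,\to,0,1\rangle$ is a semi-Heyting algebra. *)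

(* Defs.v *)
From mathcomp Require Import all_boot.
Set Implicit Arguments. Unset Strict Implicit. Unset Printing Implicit Defensive.

(* The chain C_n is modelled by 'I_n = {0,...,n-1}, a_i = i, with
   0 = a_0 (value 0) and 1 = a_{n-1} (value n.-1); meet = min. *)
Definition chain_meet (n : nat) (x y : 'I_n) : 'I_n := if x <= y then x else y.

(* A binary operation on C_n is a finite function 'I_n * 'I_n -> 'I_n,
   with x -> y := imp (x, y).  (SH1) holds automatically for the chain. *)
Definition is_semiHeyting (n : nat) (imp : {ffun 'I_n * 'I_n -> 'I_n}) : bool :=
  [forall x : 'I_n, forall y : 'I_n,
      chain_meet x (imp (x, y)) == chain_meet x y]
  && [forall x : 'I_n, forall y : 'I_n, forall z : 'I_n,
      chain_meet x (imp (y, z))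
        == chain_meet x (imp (chain_meet x y, chain_meet x z))]
  && [forall x : 'I_n, (imp (x, x) : nat) == n.-1].

Definition N (n : nat) : nat := #|[set imp : {ffun 'I_n * 'I_n -> 'I_n} | is_semiHeyting imp]|.

(* Main.v *)
Require Import Defs.
From mathcomp Require Import all_boot zify.
Set Implicit Arguments. Unset Strict Implicit.

Lemma fact_dvd i m : i <= m -> i`! %| m`!.
Proof. by move=> h; rewrite -(bin_fact h) dvdn_mull // dvdn_mulr. Qed.

Fixpoint cc (m : nat) : nat := if m is m'.+1 then 1 + m'.+1 * cc m' else 1.

Lemma cc_sum m : cc m = \sum_(i < m.+1) m`! %/ i`!.
Proof.
elim: m => [|m IH]; first by rewrite big_ord1.
rewrite big_ord_recr /= divnn fact_gt0 IH big_distrr /= addnC; congr (_ + _).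
apply: eq_bigr => i _; rewrite factS muln_divA // fact_dvd //; exact: ltn_ord i.
Qed.

Lemma row_sum m y : y <= m ->
  \sum_(y.+1 <= k < m.+2) \prod_(y.+1 <= z < k) (m.+1 - z) = cc (m - y).
Proof.
move=> hy; have [d hd] : exists d, d = m - y by eexists.
elim: d y hy hd => [|d IH] y hy hd.
  have -> : y = m by lia.
  by rewrite subnn big_nat1 big_geq.
rewrite -hd /= big_ltn; last by lia.
rewrite big_geq //; congr (_ + _).
rewrite (eq_big_nat _ _ (F2 := fun k => (m - y) * \prod_(y.+2 <= z < k) (m.+1 - z))); last first.
  move=> k hk; rewrite big_ltn; last by lia.
  congr (_ * _); lia.
rewrite -big_distrr /= (IH y.+1); [|lia|lia].
by rewrite -hd; have -> : m - y.+1 = d by lia.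
Qed.


Section S.
Variable m : nat.
Notation I := 'I_m.+1.
Variable imp : {ffun I * I -> I}.

Definition V (a b : nat) : nat := imp (inord a, inord b).

Lemma V_le a b : V a b <= m.
Proof. by rewrite /V -ltnS ltn_ord. Qed.

Lemma V_ord (y z : I) : (imp (y, z) : nat) = V y z.
Proof. by rewrite /V !inord_val. Qed.

Lemma meet_val n (x y : 'I_n) : (chain_meet x y : nat) = minn x y.
Proof. rewrite /chain_meet; case: ifP => h; lia. Qed.

Lemma meet_inord (x y : I) : chain_meet x y = inord (minn x y).
Proof. apply: val_inj; rewrite /= inordK; [exact: meet_val|have := ltn_ord x; lia]. Qed.

Definition NSH :=
  [/\ (forall x y, x <= m -> y <= m -> minn x (V x y) = minn x y),
      (forall x y z, x <= m -> y <= m -> z <= m ->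
          minn x (V y z) = minn x (V (minn x y) (minn x z)))
    & (forall x, x <= m -> V x x = m)].

Lemma SH_NSH : is_semiHeyting imp <-> NSH.
Proof.
split.
  case/andP => [/andP [/forallP H2 /forallP H3] /forallP H4]; split.
  - move=> x y hx hy; move/forallP: (H2 (inord x)) => /(_ (inord y)) /eqP/(congr1 val).
    by rewrite /= !meet_val V_ord !inordK.
  - move=> x y z hx hy hz.
    move/forallP: (H3 (inord x)) => /(_ (inord y)) /forallP /(_ (inord z)) /eqP/(congr1 val).
    rewrite /= !meet_val !V_ord !meet_val !inordK //.
  - move=> x hx; move/eqP: (H4 (inord x)); by rewrite V_ord inordK.
case=> H2 H3 H4; apply/andP; split; first (apply/andP; split).
- apply/forallP => x; apply/forallP => y; apply/eqP; apply: val_inj.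
  by rewrite /= !meet_val V_ord (H2 _ _ (ltn_ord x) (ltn_ord y)).
- apply/forallP => x; apply/forallP => y; apply/forallP => z; apply/eqP; apply: val_inj.
  by rewrite /= !meet_val !V_ord !meet_val (H3 _ _ _ (ltn_ord x) (ltn_ord y) (ltn_ord z)).
- by apply/forallP => x; rewrite V_ord (H4 _ (ltn_ord x)).
Qed.

Definition RowF (y k : nat) := forall z, z <= m ->
  [/\ z < y -> V y z = z, z = y -> V y z = m,
      y < z -> z < k -> z <= V y z & y < z -> k <= z -> V y z = k - 1].

Lemma row_unique y k1 k2 : y < k1 <= m.+1 -> y < k2 <= m.+1 ->
  RowF y k1 -> RowF y k2 -> k1 = k2.
Proof.
move=> h1 h2 R1 R2.
wlog lt : k1 k2 h1 h2 R1 R2 / k1 < k2.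
  move=> W; case: (ltngtP k1 k2) => // c; [exact: W| symmetry; exact: W].
have hz : k1 <= m by lia.
case: (R1 k1 hz) => _ _ _ a; case: (R2 k1 hz) => _ _ b _.
have := a ltac:(lia) ltac:(lia); have := b ltac:(lia) ltac:(lia); lia.
Qed.

Lemma sound : (forall y, y <= m -> exists k, y < k <= m.+1 /\ RowF y k) -> NSH.
Proof.
move=> H; split.
- move=> x y hx hy; have [k [hk R]] := H x hx.
  case: (R y hy) => a b c d; have := V_le x y; lia.
- move=> x y z hx hy hz.
  have [kx [hkx Rx]] := H x hx; have [ky [hky Ry]] := H y hy.
  case: (boolP (x <= y)) => hxy; case: (boolP (x <= z)) => hxz.
  + have -> : minn x y = x by lia. have -> : minn x z = x by lia.
    case: (Rx x hx) => _ b _ _; rewrite b //.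
    case: (Ry z hz) => a1 b1 c1 d1; have := V_le y z; lia.
  + have -> : minn x y = x by lia. have -> : minn x z = z by lia.
    case: (Rx z hz) => a b _ _; case: (Ry z hz) => a1 b1 c1 d1; lia.
  + have -> : minn x y = y by lia. have -> : minn x z = x by lia.
    case: (Ry z hz) => a1 b1 c1 d1; case: (Ry x hx) => a2 b2 c2 d2.
    have := V_le y z; have := V_le y x; lia.
  + have -> : minn x y = y by lia. have -> : minn x z = z by lia. by [].
- move=> x hx; have [k [hk R]] := H x hx; by case: (R x hx) => _ -> .
Qed.

Lemma complete : NSH -> forall y, y <= m -> exists k, y < k <= m.+1 /\ RowF y k.
Proof.
case=> H2 H3 H4 y hy.
have Pb : forall z, z <= m -> z < y -> V y z = z.
  move=> z hz hzy; have := H2 y z hy hz; have := V_le y z; lia.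
have Pc : forall z, z <= m -> y < z -> y <= V y z.
  move=> z hz hzy; have := H2 y z hy hz; lia.
have Pd : forall x z, z <= m -> y < x < z -> minn x (V y z) = minn x (V y x).
  move=> x z hz hx; have := H3 x y z ltac:(lia) hy hz.
  have -> : minn x y = y by lia. by have -> : minn x z = x by lia.
pose P k := (y < k) && ((k == m.+1) || ((k <= m) && (V y k < k))).
have ex : exists k, P k by exists m.+1; rewrite /P eqxx /= andbT; lia.
case: (ex_minnP ex) => k Pk Kmin.
have hk : y < k <= m.+1.
  have h1 : P m.+1 by rewrite /P eqxx /= andbT; lia.
  have := Kmin m.+1 h1; move: Pk; rewrite /P => /andP [] ? _; lia.
have notP : forall z, z <= m -> y < z -> z < k -> z <= V y z.
  move=> z hz h1 h2; case: (leqP z (V y z)) => // hlt.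
  have := Kmin z; rewrite /P h1 hz hlt orbT => /(_ isT); lia.
have Kfall : k <= m -> V y k = k - 1.
  move=> hkm; move: Pk; rewrite /P; case/andP => _ /orP [/eqP ?|/andP [_ hv]]; first lia.
  have := Pc k hkm ltac:(lia).
  case: (ltngtP (y.+1) k) => c1; last by lia.
  - have := notP k.-1 ltac:(lia) ltac:(lia) ltac:(lia).
    have := Pd k.-1 k hkm ltac:(lia); lia.
  - lia.
exists k; split => // z hz; split.
- exact: Pb.
- by move=> ->; exact: H4.
- exact: notP.
- move=> h1 h2; have hkm : k <= m by lia.
  have := Kfall hkm; case: (boolP (k < z)) => c1.
  + have := Pd k z hz ltac:(lia); lia.
  + by have -> : z = k by lia.
Qed.

End S.


Definition memF m (y k z v : nat) : bool :=
  if z < y then v == z else if z == y then v == m else if z < k then z <= v else v == k - 1.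

Definition G m (K : {ffun 'I_m.+1 -> 'I_m.+2}) (p : 'I_m.+1 * 'I_m.+1) : pred 'I_m.+1 :=
  fun v => (p.1 < K p.1) && memF m p.1 (K p.1) p.2 v.

Lemma memF_spec m y k z v : memF m y k z v <->
  [/\ z < y -> v = z, z = y -> v = m, y < z -> z < k -> z <= v & y < z -> k <= z -> v = k - 1].
Proof.
rewrite /memF; case: (boolP (z < y)) => h1; [|case: (boolP (z == y)) => h2;
  [|case: (boolP (z < k)) => h3]]; split; try (move=> H; split; move=> *; lia);
  case=> a b c d; lia.
Qed.

Lemma fam_iff m (imp : {ffun 'I_m.+1 * 'I_m.+1 -> 'I_m.+1}) (K : {ffun 'I_m.+1 -> 'I_m.+2}) : imp \in family (G K) <->
  forall y : 'I_m.+1, y < K y /\ RowF imp y (K y).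
Proof.
split.
  move/familyP => H y; have := H (y, y); rewrite /G /= => /andP [hk _]; split => //.
  move=> z hz; have := H (y, inord z); rewrite /G /= => /andP [_ /memF_spec].
  by rewrite V_ord inordK.
move=> H; apply/familyP => [[y z]]; have [hk R] := H y.
rewrite /G /= hk /=; apply/memF_spec; rewrite V_ord; exact: R (ltn_ord z).
Qed.

Lemma fam_SH m (imp : {ffun 'I_m.+1 * 'I_m.+1 -> 'I_m.+1}) (K : {ffun 'I_m.+1 -> 'I_m.+2}) : imp \in family (G K) -> is_semiHeyting imp.
Proof.
move/fam_iff => H; apply/SH_NSH; apply: sound => y hy.
have [hk R] := H (inord y); rewrite inordK in hk R => //.
exists (K (inord y)); split => //; rewrite hk /=.
by have := ltn_ord (K (inord y)).
Qed.

Lemma SH_fam m (imp : {ffun 'I_m.+1 * 'I_m.+1 -> 'I_m.+1}) : is_semiHeyting imp -> exists K : {ffun 'I_m.+1 -> 'I_m.+2},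
  imp \in family (G K).
Proof.
move/SH_NSH/complete => C.
have : forall y : 'I_m.+1, exists k : 'I_m.+2, y < k /\ RowF imp y k.
  move=> y; have [k [hk R]] := C y (ltn_ord y).
  have hk2 : k < m.+2 by lia.
  by exists (Ordinal hk2); split => //=; lia.
case/fin_all_exists => K0 HK0; exists (finfun K0); apply/fam_iff => y.
by rewrite ffunE.
Qed.

Lemma fam_unique m (imp : {ffun 'I_m.+1 * 'I_m.+1 -> 'I_m.+1}) (K1 K2 : {ffun 'I_m.+1 -> 'I_m.+2}) :
  imp \in family (G K1) -> imp \in family (G K2) -> K1 = K2.
Proof.
move=> /fam_iff H1 /fam_iff H2; apply/ffunP => y; apply: val_inj.
have [a1 b1] := H1 y; have [a2 b2] := H2 y.
apply: (row_unique _ _ b1 b2).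
- by rewrite a1 -ltnS ltn_ord.
- by rewrite a2 -ltnS ltn_ord.
Qed.

Lemma sum_fam m (imp : {ffun 'I_m.+1 * 'I_m.+1 -> 'I_m.+1}) :
  \sum_(K : {ffun 'I_m.+1 -> 'I_m.+2}) (imp \in family (G K) : nat) = is_semiHeyting imp.
Proof.
case: (boolP (is_semiHeyting imp)) => h.
  have [K0 h0] := SH_fam h; rewrite (bigD1 K0) //= h0 big1 // => K hK.
  case: (boolP (imp \in family (G K))) => // hf.
  by move: hK; rewrite (fam_unique hf h0) eqxx.
rewrite big1 // => K _; case: (boolP (imp \in family (G K))) => // hf.
by rewrite (fam_SH hf) in h.
Qed.


Lemma card_ordP N (p : pred nat) : #|[pred v : 'I_N | p v]| = count p (iota 0 N).
Proof.
rewrite -sum1_card -(big_mkord p (fun _ => 1)) sum1_count /index_iota subn0.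
by [].
Qed.

Lemma count_eq N c : c < N -> count (fun v => v == c) (iota 0 N) = 1.
Proof.
move=> h; rewrite (eq_count (a2 := pred1 c)) // count_uniq_mem ?iota_uniq //.
by rewrite mem_iota h.
Qed.

Lemma count_ge N z : count (fun v => z <= v) (iota 0 N) = N - z.
Proof.
elim: N => [|N IH] //; rewrite -addn1 iotaD count_cat IH /=; lia.
Qed.

Definition cnt m (y k z : nat) : nat :=
  if y < k then (if z < y then 1 else if z == y then 1 else if z < k then m.+1 - z else 1)
  else 0.

Lemma card_G m (K : {ffun 'I_m.+1 -> 'I_m.+2}) (y z : 'I_m.+1) :
  #|G K (y, z)| = cnt m y (K y) z.
Proof.
have -> : #|G K (y, z)| = #|[pred v : 'I_m.+1 | (y < K y) && memF m y (K y) z v]|.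
  by apply: eq_card.
rewrite (card_ordP _ (fun v => (y < K y) && memF m y (K y) z v)) /cnt.
case hk: (y < K y); last first.
  by rewrite (eq_count (a2 := pred0)) ?count_pred0.
rewrite (eq_count (a2 := fun v => memF m y (K y) z v)) //.
have hz := ltn_ord z; have hK := ltn_ord (K y).
rewrite /memF.
case: ifP => h1; first exact: count_eq.
case: ifP => h2; first by apply: count_eq.
case: ifP => h3; first by rewrite count_ge.
by apply: count_eq; lia.
Qed.


Lemma prod_cnt m y k : y < k <= m.+1 ->
  \prod_(z < m.+1) cnt m y k z = \prod_(y.+1 <= z < k) (m.+1 - z).
Proof.
move=> h; rewrite -(big_mkord (fun _ => true) (cnt m y k)) (big_cat_nat _ (n := k)) //=; last by lia.
rewrite [X in _ * X](eq_big_nat _ _ (F2 := fun _ => 1)); last first.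
  by move=> i hi; rewrite /cnt; repeat (case: ifP => ?); lia.
rewrite big1_eq muln1 (big_cat_nat _ (n := y.+1)) //=; last by lia.
rewrite (eq_big_nat _ _ (F2 := fun _ => 1)); last first.
  by move=> i hi; rewrite /cnt; repeat (case: ifP => ?); lia.
rewrite big1_eq mul1n; apply: eq_big_nat => i hi.
rewrite /cnt; repeat (case: ifP => ?); lia.
Qed.

Lemma sum_cnt m y : y <= m ->
  \sum_(k < m.+2) \prod_(z < m.+1) cnt m y k z = cc (m - y).
Proof.
move=> hy; rewrite -(big_mkord (fun _ => true) (fun k => \prod_(z < m.+1) cnt m y k z)) (big_cat_nat _ (n := y.+1)) //=; last by lia.
rewrite (eq_big_nat _ _ (F2 := fun _ => 0)); last first.
  move=> k hk; rewrite big_ord_recl /= {1}/cnt ifF //; lia.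
rewrite big1_eq add0n -(row_sum hy); apply: eq_big_nat => k hk.
apply: prod_cnt; lia.
Qed.


Lemma card_fam m (K : {ffun 'I_m.+1 -> 'I_m.+2}) :
  #|family (G K)| = \prod_(y < m.+1) \prod_(z < m.+1) cnt m y (K y) z.
Proof.
rewrite card_family foldrE big_map big_enum /= pair_bigA.
apply: eq_bigr => [[y z]] _; exact: card_G.
Qed.

Lemma N_prod m : N m.+1 = \prod_(y < m.+1) cc (m - y).
Proof.
rewrite /N -sum1_card big_mkcond /=.
rewrite (eq_bigr (fun imp => \sum_(K : {ffun 'I_m.+1 -> 'I_m.+2}) (imp \in family (G K) : nat))); last first.
  by move=> imp _; rewrite sum_fam inE.
rewrite exchange_big /=.
rewrite (eq_bigr (fun K : {ffun 'I_m.+1 -> 'I_m.+2} => \prod_(y < m.+1) \prod_(z < m.+1) cnt m y (K y) z)); last first.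
  move=> K _; rewrite -card_fam -sum1_card [RHS]big_mkcond /=; apply: eq_bigr => i _.
  by case: (i \in family (G K)).
rewrite -(bigA_distr_bigA (fun (y : 'I_m.+1) (k : 'I_m.+2) => \prod_(z < m.+1) cnt m y k z)).
by apply: eq_bigr => y _; rewrite sum_cnt // -ltnS.
Qed.

Theorem mainTheorem3 (n : nat) (hn : 2 <= n) :
  N n = (\sum_(i < n) (n.-1)`! %/ i`!) * N n.-1.
Proof.
case: n hn => [|[|m]] // _.
rewrite /= N_prod N_prod big_ord_recl -cc_sum subn0; congr (_ * _).
Qed.
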